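(* Let $\gamma=(\alpha,\beta)\in\mathfrak{D}$ and $T=T_\gamma$. For every integer $\ell\ge1$ there exist $C_1,C_2>0$ depending on $\gamma,\ell$ such that for all $m\ge1$, $$\sup_{x\in(0,1):\,T^m(x)\ge b_\ell}\frac{1}{(T^m)'(x)}\le C_1\,m^{-1-\frac1{\alpha\beta}},\qquad \sup_{x\in(0,1):\,T^m(x)\ge b_\ell}\frac{(T^m)''(x)}{((T^m)'(x))^2}\le C_2.$$
   Context: $\mathfrak{D}=\{(\alpha,\beta)\in(0,1)\times[1,\infty):\alpha\beta<1\}$. For $\gamma=(\alpha,\beta)\in\mathfrak{D}$, $T_\gamma(x)=x(1+2^\alpha x^\alpha)$ on $[0,\tfrac12)$ and $T_\gamma(x)=2^\beta(x-\tfrac12)^\beta$ on $[\tfrac12,1]$. Let $f_{\gamma,1}(x)=x(1+2^\alpha x^\alpha)$ on $[0,\tfrac12]$ (a bijection onto $[0,1]$) and $b_\ell=f_{\gamma,1}^{-\ell}(\tfrac12)$, the $\ell$-th preimage of $\tfrac12$ under the left branch. *)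

(* Defs.v *)
From Stdlib Require Import Reals.
From Coquelicot Require Import Coquelicot.
Open Scope R_scope.

Definition rpow (a y : R) : R :=
  if Rlt_dec 0 a then Rpower a y else 0.

Definition in_D (alpha beta : R) : Prop :=
  0 < alpha < 1 /\ 1 <= beta /\ alpha * beta < 1.

(* T_gamma(x) = x(1 + 2^alpha x^alpha) on [0,1/2),
   T_gamma(x) = 2^beta (x - 1/2)^beta on [1/2,1].
   (Note 2^a x^a = (2x)^a for x >= 0.) *)
Definition Tmap (alpha beta : R) (x : R) : R :=
  if Rlt_dec x (1/2) then x * (1 + rpow (2 * x) alpha)
  else rpow (2 * (x - 1/2)) beta.

Definition f1 (alpha : R) (x : R) : R := x * (1 + rpow (2 * x) alpha).

Definition Titer (alpha beta : R) (m : nat) (x : R) : R :=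
  Nat.iter m (Tmap alpha beta) x.

(* Main.v *)
Require Import Defs.
From Stdlib Require Import Reals.
From Coquelicot Require Import Coquelicot.
Open Scope R_scope.
From Stdlib Require Import Lra Lia.

Lemma rpow_pos (x y : R) : 0 < x -> rpow x y = Rpower x y.
Proof. intros H; unfold rpow; destruct (Rlt_dec 0 x); [reflexivity|lra]. Qed.

Lemma Rpower_pos x y : 0 < Rpower x y.
Proof. unfold Rpower; apply exp_pos. Qed.

Definition Tp (a bt z : R) : R :=
  if Rlt_dec z (1/2) then 1 + (1+a) * rpow (2*z) a
  else 2*bt * rpow (2*(z-1/2)) (bt-1).
Definition Tpp (a bt z : R) : R :=
  if Rlt_dec z (1/2) then (1+a)*a*2 * rpow (2*z) (a-1)
  else 4*bt*(bt-1) * rpow (2*(z-1/2)) (bt-2).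

Definition good (z : R) : Prop := 0 < z < 1 /\ z <> 1/2.

Lemma is_derive_rpow_lin (c d p y : R) : 0 < c*y+d ->
  is_derive (fun y => Rpower (c*y+d) p) y (c * (p * Rpower (c*y+d) (p-1))).
Proof.
  intros H.
  apply (is_derive_comp (fun x => Rpower x p) (fun y => c*y+d)).
  - apply is_derive_Reals. apply derivable_pt_lim_power. exact H.
  - auto_derive; auto; ring.
Qed.

Lemma Rpower_m1 (x p : R) : 0 < x -> Rpower x (p-1) = Rpower x p / x.
Proof.
  intros H. unfold Rminus. rewrite Rpower_plus, Rpower_Ropp, Rpower_1 by exact H.
  reflexivity.
Qed.

Lemma T_left a bt z : z < 1/2 -> 0 < z ->
  Tmap a bt z = z * (1 + Rpower (2*z) a) /\
  Tp a bt z = 1 + (1+a) * Rpower (2*z) a /\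
  Tpp a bt z = (1+a)*a*2 * Rpower (2*z) (a-1).
Proof.
  intros H1 H2. unfold Tmap, Tp, Tpp.
  destruct (Rlt_dec z (1/2)); [|lra].
  rewrite !rpow_pos by lra. auto.
Qed.

Lemma T_right a bt z : 1/2 < z ->
  Tmap a bt z = Rpower (2*(z-1/2)) bt /\
  Tp a bt z = 2*bt * Rpower (2*(z-1/2)) (bt-1) /\
  Tpp a bt z = 4*bt*(bt-1) * Rpower (2*(z-1/2)) (bt-2).
Proof.
  intros H1. unfold Tmap, Tp, Tpp.
  destruct (Rlt_dec z (1/2)); [lra|].
  rewrite !rpow_pos by lra. auto.
Qed.

Lemma T_deriv a bt z : good z ->
  is_derive (Tmap a bt) z (Tp a bt z) /\ is_derive (Tp a bt) z (Tpp a bt z).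
Proof.
  intros [[H0 H1] H2].
  destruct (Rlt_dec z (1/2)) as [Hl|Hr].
  - assert (Hloc : forall P : R -> Prop, (forall y, 0 < y < 1/2 -> P y) -> locally z P).
    { intros P HP. assert (He : 0 < Rmin z (1/2 - z)) by (apply Rmin_case; lra).
      exists (mkposreal _ He). intros y Hy. apply HP.
      change (Rabs (y - z) < Rmin z (1/2 - z)) in Hy.
      apply Rabs_def2 in Hy. destruct Hy as [Hy1 Hy2].
      assert (Rmin z (1/2 - z) <= z) by apply Rmin_l.
      assert (Rmin z (1/2 - z) <= 1/2 - z) by apply Rmin_r. lra. }
    destruct (T_left a bt z Hl H0) as [E1 [E2 E3]].
    split.
    + apply is_derive_ext_loc with (f := fun y => y * (1 + Rpower (2*y+0) a)).
      { apply Hloc. intros y Hy. destruct (T_left a bt y (proj2 Hy) (proj1 Hy)) as [F _].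
        rewrite F. rewrite Rplus_0_r. reflexivity. }
      rewrite E2.
      evar (dd : R).
      replace (1 + (1 + a) * Rpower (2 * z) a) with dd.
      * apply (is_derive_mult (fun y => y) (fun y => 1 + Rpower (2*y+0) a)).
        -- apply is_derive_id.
        -- apply (is_derive_plus (fun _ => 1) (fun y => Rpower (2*y+0) a)).
           ++ apply is_derive_const.
           ++ apply is_derive_rpow_lin. lra.
        -- intros; apply Rmult_comm.
      * unfold dd. rewrite Rplus_0_r. rewrite Rpower_m1 by lra.
        change (@one R_AbsRing) with 1. change (@zero R_AbsRing) with 0.
        unfold plus, mult, zero; simpl; field; lra.
    + apply is_derive_ext_loc with (f := fun y => 1 + (1+a) * Rpower (2*y+0) a).
      { apply Hloc. intros y Hy. destruct (T_left a bt y (proj2 Hy) (proj1 Hy)) as [_ [F _]].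
        rewrite F. rewrite Rplus_0_r. reflexivity. }
      rewrite E3.
      evar (dd : R).
      replace ((1 + a) * a * 2 * Rpower (2 * z) (a - 1)) with dd.
      * apply (is_derive_plus (fun _ => 1) (fun y => (1+a) * Rpower (2*y+0) a)).
        -- apply is_derive_const.
        -- apply is_derive_scal. apply is_derive_rpow_lin. lra.
      * unfold dd. rewrite Rplus_0_r.
        unfold plus, mult, zero; simpl; ring.
  - assert (Hr' : 1/2 < z) by (destruct (Rle_lt_or_eq_dec (1/2) z); [lra| |]; [congruence|lra]).
    assert (Hloc : forall P : R -> Prop, (forall y, 1/2 < y -> P y) -> locally z P).
    { intros P HP. assert (He : 0 < z - 1/2) by lra.
      exists (mkposreal _ He). intros y Hy. apply HP.
      change (Rabs (y - z) < z - 1/2) in Hy.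
      apply Rabs_def2 in Hy. lra. }
    destruct (T_right a bt z Hr') as [E1 [E2 E3]].
    split.
    + apply is_derive_ext_loc with (f := fun y => Rpower (2*y+(-1)) bt).
      { apply Hloc. intros y Hy. destruct (T_right a bt y Hy) as [F _].
        rewrite F. assert (E : 2*y+(-1) = 2*(y-1/2) :> R) by lra. rewrite E. reflexivity. }
      rewrite E2.
      replace (2 * bt * Rpower (2 * (z - 1 / 2)) (bt - 1)) with
        (2 * (bt * Rpower (2*z+(-1)) (bt-1))).
      * apply is_derive_rpow_lin. lra.
      * replace (2*z+(-1)) with (2 * (z - 1 / 2)) by lra. ring.
    + apply is_derive_ext_loc with (f := fun y => 2*bt * Rpower (2*y+(-1)) (bt-1)).
      { apply Hloc. intros y Hy. destruct (T_right a bt y Hy) as [_ [F _]].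
        rewrite F. replace (2*y+(-1)) with (2 * (y - 1 / 2)) by lra. reflexivity. }
      rewrite E3.
      replace (4 * bt * (bt - 1) * Rpower (2 * (z - 1 / 2)) (bt - 2)) with
        (2*bt * (2 * ((bt-1) * Rpower (2*z+(-1)) (bt-1-1)))).
      * apply is_derive_scal. apply is_derive_rpow_lin. lra.
      * replace (2*z+(-1)) with (2 * (z - 1 / 2)) by lra.
        replace (bt-1-1) with (bt-2) by ring. ring.
Qed.
Fixpoint DD (a bt : R) (m : nat) (y : R) : R :=
  match m with O => 1 | S m => Tp a bt (Titer a bt m y) * DD a bt m y end.
Fixpoint EE (a bt : R) (m : nat) (y : R) : R :=
  match m with O => 0
  | S m => Tpp a bt (Titer a bt m y) * (DD a bt m y)^2 + Tp a bt (Titer a bt m y) * EE a bt m y end.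

Lemma good_open z : good z -> locally z good.
Proof.
  intros [[H0 H1] H2].
  assert (He : 0 < Rmin (Rmin z (1 - z)) (Rabs (z - 1/2))).
  { apply Rmin_case; [apply Rmin_case; lra|]. apply Rabs_pos_lt. lra. }
  exists (mkposreal _ He). intros y Hy.
  change (Rabs (y - z) < Rmin (Rmin z (1 - z)) (Rabs (z - 1/2))) in Hy.
  assert (A1 := Rmin_l (Rmin z (1 - z)) (Rabs (z - 1/2))).
  assert (A2 := Rmin_r (Rmin z (1 - z)) (Rabs (z - 1/2))).
  assert (A3 := Rmin_l z (1 - z)). assert (A4 := Rmin_r z (1 - z)).
  apply Rabs_def2 in Hy. split; [lra|].
  intros E. subst y. revert A2 Hy. unfold Rabs; destruct (Rcase_abs (z - 1/2)); lra.
Qed.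

Lemma Titer_S a bt m y : Titer a bt (S m) y = Tmap a bt (Titer a bt m y).
Proof. reflexivity. Qed.

Lemma iter_deriv a bt m x :
  (forall k, (k < m)%nat -> good (Titer a bt k x)) ->
  locally x (fun y => is_derive (Titer a bt m) y (DD a bt m y) /\
                      is_derive (DD a bt m) y (EE a bt m y)).
Proof.
  induction m as [|m IH]; intros Hg.
  - apply filter_forall. intros y. split.
    + unfold Titer; simpl. auto_derive; auto.
    + simpl. auto_derive; auto.
  - assert (Hm : locally x (fun y => is_derive (Titer a bt m) y (DD a bt m y) /\
                      is_derive (DD a bt m) y (EE a bt m y))).
    { apply IH. intros k Hk. apply Hg. lia. }
    assert (Hc : continuous (Titer a bt m) x).
    { apply (ex_derive_continuous (K:=R_AbsRing) (V:=R_NormedModule)). exists (DD a bt m x).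
      exact (proj1 (locally_singleton _ _ Hm)). }
    assert (Hgm : locally x (fun y => good (Titer a bt m y))).
    { apply Hc. apply good_open. apply Hg. lia. }
    generalize (filter_and _ _ Hm Hgm). apply filter_imp.
    intros y [[H1 H2] H3].
    destruct (T_deriv a bt _ H3) as [T1 T2].
    split.
    + apply (is_derive_ext (fun y => Tmap a bt (Titer a bt m y))). { intros; reflexivity. }
      simpl. rewrite Rmult_comm.
      exact (is_derive_comp (Tmap a bt) (Titer a bt m) y _ _ T1 H1).
    + simpl.
      assert (Hc2 := is_derive_comp (Tp a bt) (Titer a bt m) y _ _ T2 H1).
      assert (Hp := is_derive_mult _ _ y _ _ Hc2 H2 (fun u v => Rmult_comm u v)).
      eapply is_derive_ext. { intros; reflexivity. }
      evar (dd : R). replace (Tpp a bt (Titer a bt m y) * (DD a bt m y * (DD a bt m y * 1)) +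
        Tp a bt (Titer a bt m y) * EE a bt m y) with dd. exact Hp.
      unfold dd. unfold plus, mult, scal; simpl. unfold mult; simpl. ring.
Qed.

Lemma Rpower_1_base a : Rpower 1 a = 1.
Proof. unfold Rpower. rewrite ln_1, Rmult_0_r. apply exp_0. Qed.

Lemma Rpower_lt1 x a : 0 < a -> 0 < x < 1 -> Rpower x a < 1.
Proof. intros Ha Hx. rewrite <- (Rpower_1_base a). apply Rlt_Rpower_l; lra. Qed.

Lemma Tmap_range a bt z : 0 < a -> 1 <= bt -> 0 <= z < 1 -> 0 <= Tmap a bt z < 1 /\ (good z -> 0 < Tmap a bt z).
Proof.
  intros Ha Hb [H0 H1]. unfold Tmap, rpow.
  destruct (Rlt_dec z (1/2)).
  - destruct (Rlt_dec 0 (2*z)).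
    + assert (Rpower (2*z) a < 1) by (apply Rpower_lt1; lra).
      assert (0 < Rpower (2*z) a) by apply Rpower_pos.
      assert (z*Rpower (2*z) a <= z*1) by (apply Rmult_le_compat_l; lra).
      assert (0 <= z*Rpower (2*z) a) by (apply Rmult_le_pos; lra).
      split; [split; lra|]. intros [[? ?] ?]. assert (0 < z*Rpower (2*z) a) by (apply Rmult_lt_0_compat; lra). lra.
    + assert (z = 0) by lra. subst. split; [lra|]. intros [[? ?] ?]; lra.
  - destruct (Rlt_dec 0 (2*(z-1/2))).
    + assert (Rpower (2*(z-1/2)) bt < 1) by (apply Rpower_lt1; lra).
      assert (0 < Rpower (2*(z-1/2)) bt) by apply Rpower_pos.
      split; [lra|]. intros _; lra.
    + split; [lra|]. intros [[? ?] ?]. assert (z = 1/2) by lra. contradiction.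
Qed.

Lemma Titer_range a bt x : 0 < a -> 1 <= bt -> 0 <= x < 1 ->
  forall m, 0 <= Titer a bt m x < 1.
Proof.
  intros Ha Hb Hx m. induction m as [|m IH]; [exact Hx|].
  rewrite Titer_S. apply (Tmap_range a bt _ Ha Hb IH).
Qed.

Lemma Tmap_0 a bt : Tmap a bt 0 = 0.
Proof. unfold Tmap. destruct (Rlt_dec 0 (1/2)); [ring|lra]. Qed.

Lemma Tmap_half a bt : Tmap a bt (1/2) = 0.
Proof. unfold Tmap, rpow. destruct (Rlt_dec (1/2) (1/2)); [lra|].
  destruct (Rlt_dec 0 (2*(1/2-1/2))); [lra|reflexivity]. Qed.

Lemma orbit_good a bt x : 0 < a -> 1 <= bt -> 0 < x < 1 ->
  forall m, 0 < Titer a bt m x -> forall k, (k < m)%nat -> good (Titer a bt k x).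
Proof.
  intros Ha Hb Hx m. induction m as [|m IH]; intros Hpos k Hk; [lia|].
  assert (Hr := Titer_range a bt x Ha Hb ltac:(lra) m).
  assert (Hg : good (Titer a bt m x)).
  { assert (Titer a bt m x <> 0).
    { intros E. rewrite Titer_S, E, Tmap_0 in Hpos. lra. }
    split; [split; lra|]. intros E. rewrite Titer_S, E, Tmap_half in Hpos. lra. }
  assert (Hm : 0 < Titer a bt m x) by (destruct Hg; lra).
  destruct (Nat.eq_dec k m) as [->|Hne]; [exact Hg|].
  apply IH; [exact Hm|lia].
Qed.

Lemma exp_tangent x y : exp x * (1 + (y - x)) <= exp y.
Proof.
  replace y with (x + (y - x)) at 2 by ring. rewrite exp_plus.
  apply Rmult_le_compat_l; [left; apply exp_pos| apply exp_ineq1_le].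
Qed.

Lemma bern_up a t : 0 < a < 1 -> 0 <= t -> Rpower (1+t) a <= 1 + a*t.
Proof.
  intros Ha Ht. unfold Rpower. set (L := ln (1+t)).
  assert (EL : exp L = 1 + t) by (unfold L; apply exp_ln; lra).
  assert (H1 := exp_tangent (a*L) L).
  assert (H2 := exp_tangent (a*L) 0). rewrite exp_0 in H2.
  assert (exp (a*L) = a * (exp (a*L) * (1 + (L - a*L))) + (1-a) * (exp (a*L) * (1 + (0 - a*L)))) by ring.
  nra.
Qed.

Lemma ln_ge a : 0 < a -> 1 - / a <= ln a.
Proof.
  intros Ha. assert (H := exp_ineq1_le (ln (/a))). rewrite exp_ln in H by (apply Rinv_0_lt_compat; lra).
  rewrite ln_Rinv in H by lra. lra.
Qed.

Lemma bern_low a t : 0 < a -> 0 <= t -> 1 + a * (t/(1+t)) <= Rpower (1+t) a.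
Proof.
  intros Ha Ht. unfold Rpower.
  assert (H := exp_ineq1_le (a * ln (1+t))).
  assert (H2 := ln_ge (1+t) ltac:(lra)).
  assert (E : 1 - / (1+t) = t/(1+t)) by (field; lra).
  rewrite E in H2. nra.
Qed.

Lemma ln2_lt1 : ln 2 < 1.
Proof.
  assert (H := exp_ineq1 1 ltac:(lra)). rewrite <- (ln_exp 1).
  apply ln_increasing; lra.
Qed.

Lemma ln4_gt1 : 1 < ln 4.
Proof.
  replace 4 with (2*2) by ring. rewrite ln_mult by lra. assert (H := ln_lt_2). lra.
Qed.

Lemma Rpower_inv_base x y : 0 < x -> Rpower (/x) y = Rpower x (-y).
Proof. intros H. unfold Rpower. rewrite ln_Rinv by exact H. f_equal; ring. Qed.

Lemma Rpower_le1 x y : 0 <= y -> 0 < x <= 1 -> Rpower x y <= 1.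
Proof. intros Hy Hx. rewrite <- (Rpower_1_base y). apply Rle_Rpower_l; lra. Qed.

Lemma exp_le x y : x <= y -> exp x <= exp y.
Proof. intros [H|H]; [left; apply exp_increasing; exact H| subst; lra]. Qed.

Lemma pow2_le_bt bt : 1 <= bt -> Rpower 2 (1 - 1/bt) <= bt.
Proof.
  intros Hb. unfold Rpower. rewrite <- (exp_ln bt) at 2 by lra.
  apply exp_le. assert (H := ln_ge bt ltac:(lra)). assert (H2 := ln2_lt1).
  assert (0 <= 1 - 1/bt). { assert (1/bt <= 1). { unfold Rdiv; rewrite Rmult_1_l.
    rewrite <- Rinv_1. apply Rinv_le_contravar; lra. } lra. }
  assert (0 < ln 2) by (rewrite <- ln_1; apply ln_increasing; lra).
  unfold Rdiv in *. rewrite Rmult_1_l in *. nra.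
Qed.

Lemma rho_le bt w : 1 <= bt -> 1/4 <= w -> 0 < w ->
  (1 + ln 4)/2 <= 2*bt * Rpower w ((bt-1)/bt).
Proof.
  intros Hb Hw Hw0.
  assert (He : 0 <= (bt-1)/bt) by (apply Rdiv_le_0_compat; lra).
  assert (H1 : Rpower (1/4) ((bt-1)/bt) <= Rpower w ((bt-1)/bt)) by (apply Rle_Rpower_l; lra).
  assert (E : Rpower (1/4) ((bt-1)/bt) = exp (- ln 4) * exp (ln 4 / bt)).
  { unfold Rpower. rewrite <- exp_plus. f_equal.
    assert (ln (1/4) = - ln 4) by (unfold Rdiv; rewrite Rmult_1_l; apply ln_Rinv; lra).
    rewrite H. field. lra. }
  assert (E2 : exp (- ln 4) = /4). { rewrite <- ln_Rinv by lra. apply exp_ln. lra. }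
  assert (H3 := exp_ineq1_le (ln 4 / bt)).
  assert (H4 := ln4_gt1).
  assert (bt * (1 + ln 4 / bt) = bt + ln 4) by (field; lra).
  rewrite E, E2 in H1. nra.
Qed.

Lemma Tp_pos a bt z : 0 < a -> 1 <= bt -> good z -> 0 < Tp a bt z.
Proof.
  intros Ha Hb [[H0 H1] H2]. destruct (Rlt_dec z (1/2)) as [Hl|Hr].
  - destruct (T_left a bt z Hl H0) as [_ [E _]]. rewrite E.
    assert (0 < Rpower (2*z) a) by apply Rpower_pos. nra.
  - assert (1/2 < z) by (destruct (Rle_lt_or_eq_dec (1/2) z); [lra|lra|congruence]).
    destruct (T_right a bt z H) as [_ [E _]]. rewrite E.
    assert (0 < Rpower (2*(z-1/2)) (bt-1)) by apply Rpower_pos. nra.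
Qed.

Lemma E_step a bt z D E : 0 < a < 1 -> 1 <= bt -> good z -> 0 < D -> E <= 2/z * D^2 ->
  Tpp a bt z * D^2 + Tp a bt z * E <= 2 / Tmap a bt z * (Tp a bt z * D)^2.
Proof.
  intros Ha Hb Hg HD HE.
  assert (HTp := Tp_pos a bt z ltac:(lra) Hb Hg).
  destruct Hg as [[H0 H1] H2].
  assert (Hk : Tpp a bt z + Tp a bt z * (2/z) <= 2 / Tmap a bt z * Tp a bt z ^ 2).
  { destruct (Rlt_dec z (1/2)) as [Hl|Hr].
    - destruct (T_left a bt z Hl H0) as [E1 [E2 E3]]. rewrite E1, E2, E3.
      rewrite Rpower_m1 by lra. set (t := Rpower (2*z) a).
      assert (0 < t) by apply Rpower_pos.
      assert (Eq : 2 / (z * (1 + t)) * (1 + (1 + a) * t) ^ 2 -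
         ((1 + a) * a * 2 * (t / (2 * z)) + (1 + (1 + a) * t) * (2 / z))
         = (2*(1 + (1 + a) * t)^2 - (1+a)*a*t*(1+t) - 2*(1 + (1 + a) * t)*(1+t)) / (z*(1+t))).
      { field. lra. }
      assert (0 <= (2*(1 + (1 + a) * t)^2 - (1+a)*a*t*(1+t) - 2*(1 + (1 + a) * t)*(1+t)) / (z*(1+t))).
      { apply Rdiv_le_0_compat; [|nra].
        replace (2*(1 + (1 + a) * t)^2 - (1+a)*a*t*(1+t) - 2*(1 + (1 + a) * t)*(1+t))
          with (a*t*((1-a) + (1+a)*t)) by ring.
        apply Rmult_le_pos; nra. }
      lra.
    - assert (Hr' : 1/2 < z) by (destruct (Rle_lt_or_eq_dec (1/2) z); [lra|lra|congruence]).
      destruct (T_right a bt z Hr') as [E1 [E2 E3]]. rewrite E1, E2, E3.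
      set (u := 2*(z-1/2)). assert (Hu : 0 < u < 1) by (unfold u; lra).
      replace (bt - 2) with (bt - 1 - 1) by ring.
      rewrite !Rpower_m1 by lra. set (P := Rpower u bt).
      assert (0 < P) by apply Rpower_pos.
      replace z with ((u+1)/2) by (unfold u; field).
      assert (Eq : 2 / P * (2 * bt * (P / u)) ^ 2 -
         (4 * bt * (bt - 1) * (P / u / u) + 2 * bt * (P / u) * (2 / ((u + 1) / 2)))
         = 4*bt*P/(u*u) * (bt + 1 - 2*u/(u+1))).
      { field. lra. }
      assert (2*u/(u+1) < 1). { apply (Rmult_lt_reg_r (u+1)); [lra|]. field_simplify; lra. }
      assert (0 <= 4*bt*P/(u*u) * (bt + 1 - 2*u/(u+1))).
      { apply Rmult_le_pos; [|lra]. apply Rdiv_le_0_compat; nra. }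
      lra. }
  assert (Tp a bt z * E <= Tp a bt z * (2/z * D^2)) by (apply Rmult_le_compat_l; lra).
  assert (0 <= D^2) by nra.
  assert ((Tpp a bt z + Tp a bt z * (2/z)) * D^2 <= 2 / Tmap a bt z * Tp a bt z ^ 2 * D^2)
    by (apply Rmult_le_compat_r; lra).
  replace ((Tp a bt z * D)^2) with (Tp a bt z ^2 * D^2) by ring.
  nra.
Qed.

Definition Ap (a : R) := 4/a.
Definition gam (a bt : R) := 1 + 1/(a*bt).
Definition rho := (1 + ln 4)/2.
Definition epsp (a bt : R) := Rpower rho (1/gam a bt) - 1.
Definition KK (a bt : R) := (1+Ap a)/(1 - Rpower 2 (-a)) + (1+2*Ap a)/epsp a bt + 1.
Definition tt (a z : R) := Rpower (2*z) a.
Definition tau (a z : R) := Ap a / tt a z.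
Definition hh (a z : R) := z * tt a z / (1 + tt a z).
Definition GG (a bt : R) (k : nat) (z : R) :=
  Rpower (INR k + KK a bt + tau a z) (gam a bt) * hh a z.

Lemma RP_mul x y z : 0 < x -> 0 < y -> Rpower (x*y) z = Rpower x z * Rpower y z.
Proof. intros; symmetry; apply Rpower_mult_distr; auto. Qed.

Lemma RP_add x y z : Rpower x y * Rpower x z = Rpower x (y+z).
Proof. rewrite Rpower_plus. reflexivity. Qed.

Lemma rho_gt1 : 1 < rho.
Proof. unfold rho. assert (H := ln4_gt1). lra. Qed.

Lemma gam_pos a bt : 0 < a -> 1 <= bt -> 1 < gam a bt.
Proof.
  intros. unfold gam. assert (0 < 1/(a*bt)) by (apply Rdiv_lt_0_compat; nra). lra.
Qed.

Lemma epsp_pos a bt : 0 < a -> 1 <= bt -> 0 < epsp a bt.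
Proof.
  intros Ha Hb. unfold epsp. assert (H := gam_pos a bt Ha Hb).
  assert (1 < Rpower rho (1/gam a bt)).
  { assert (H3 : Rpower 1 (1/gam a bt) < Rpower rho (1/gam a bt)).
    { apply Rlt_Rpower_l.
      - apply Rdiv_lt_0_compat; lra.
      - assert (H2 := rho_gt1). lra. }
    rewrite Rpower_1_base in H3. exact H3. }
  lra.
Qed.

Lemma pow2ma a : 0 < a -> 0 < Rpower 2 (-a) < 1.
Proof.
  intros Ha. split; [apply Rpower_pos|]. rewrite <- (Rpower_O 2) by lra.
  apply Rpower_lt; lra.
Qed.

Lemma KK_props a bt : 0 < a -> 1 <= bt ->
  1 <= KK a bt /\ (1 + Ap a)/KK a bt <= 1 - Rpower 2 (-a) /\
  (1 + 2 * Ap a)/KK a bt <= epsp a bt.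
Proof.
  intros Ha Hb. assert (He := epsp_pos a bt Ha Hb). assert (Hp := pow2ma a Ha).
  assert (HA : 0 < Ap a) by (unfold Ap; apply Rdiv_lt_0_compat; lra).
  set (c1 := (1+Ap a)/(1 - Rpower 2 (-a))). set (c2 := (1+2*Ap a)/epsp a bt).
  assert (0 < c1) by (apply Rdiv_lt_0_compat; lra).
  assert (0 < c2) by (apply Rdiv_lt_0_compat; lra).
  assert (EK : KK a bt = c1 + c2 + 1) by reflexivity.
  split; [lra|]. split.
  - apply (Rmult_le_reg_r (KK a bt)); [lra|]. unfold Rdiv. rewrite Rmult_assoc, Rinv_l by lra.
    assert (1 + Ap a = c1 * (1 - Rpower 2 (-a))) by (unfold c1; field; lra). nra.
  - apply (Rmult_le_reg_r (KK a bt)); [lra|]. unfold Rdiv. rewrite Rmult_assoc, Rinv_l by lra.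
    assert (1 + 2*Ap a = c2 * epsp a bt) by (unfold c2; field; lra). nra.
Qed.

Lemma tt_pos a z : 0 < tt a z.
Proof. apply Rpower_pos. Qed.

Lemma hh_pos a z : 0 < z -> 0 < hh a z.
Proof. intros Hz. unfold hh. assert (Ht := tt_pos a z). apply Rdiv_lt_0_compat; nra. Qed.

Lemma hh_mono a p q : 0 <= a -> 0 < p <= q -> hh a p <= hh a q.
Proof.
  intros Ha0 Hpq. unfold hh.
  assert (H1 : tt a p <= tt a q) by (unfold tt; apply Rle_Rpower_l; lra).
  assert (H2 := tt_pos a p). assert (H3 := tt_pos a q).
  assert (tt a p / (1 + tt a p) <= tt a q / (1 + tt a q)).
  { apply (Rmult_le_reg_r ((1 + tt a p)*(1+tt a q))); [nra|].
    replace (tt a p / (1 + tt a p) * ((1 + tt a p) * (1 + tt a q))) with (tt a p * (1+tt a q)) by (field; lra).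
    replace (tt a q / (1 + tt a q) * ((1 + tt a p) * (1 + tt a q))) with (tt a q * (1+tt a p)) by (field; lra).
    nra. }
  unfold Rdiv in *. rewrite !Rmult_assoc.
  assert (0 <= tt a p * / (1 + tt a p)) by (apply Rmult_le_pos; [lra|left; apply Rinv_0_lt_compat; lra]).
  apply Rmult_le_compat; lra.
Qed.

Lemma hh_le a z : 0 < z -> hh a z <= z * tt a z.
Proof.
  intros Hz. unfold hh. assert (Htz := tt_pos a z).
  apply (Rmult_le_reg_r (1 + tt a z)); [lra|].
  replace (z * tt a z / (1 + tt a z) * (1 + tt a z)) with (z * tt a z) by (field; lra).
  assert (0 < z * tt a z) by nra. nra.
Qed.

Lemma G_left a bt k z : 0 < a < 1 -> 1 <= bt -> 0 < z < 1/2 ->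
  GG a bt (S k) (Tmap a bt z) <= Tp a bt z * GG a bt k z.
Proof.
  intros Ha Hb Hz.
  destruct (T_left a bt z (proj2 Hz) (proj1 Hz)) as [E1 [E2 _]].
  destruct (KK_props a bt ltac:(lra) Hb) as [HK _].
  assert (HA : 0 < Ap a) by (unfold Ap; apply Rdiv_lt_0_compat; lra).
  assert (Hg := gam_pos a bt ltac:(lra) Hb).
  set (t := tt a z).
  assert (Ht : 0 < t < 1). { split; [apply tt_pos|]. apply Rpower_lt1; lra. }
  set (P := Rpower (1+t) a).
  assert (HP1 := bern_up a t Ha ltac:(lra)). fold P in HP1.
  assert (HP2 := bern_low a t ltac:(lra) ltac:(lra)). fold P in HP2.
  assert (HTz : Tmap a bt z = z * (1+t)) by (rewrite E1; reflexivity).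
  assert (Htt : tt a (Tmap a bt z) = t * P).
  { rewrite HTz. unfold tt at 1. replace (2*(z*(1+t))) with ((2*z)*(1+t)) by ring.
    rewrite RP_mul by lra. reflexivity. }
  assert (HTp : Tp a bt z = 1 + (1+a)*t) by (rewrite E2; reflexivity).
  unfold GG. rewrite S_INR.
  assert (Hk := pos_INR k).
  assert (Htau : tau a (Tmap a bt z) + 1 <= tau a z).
  { unfold tau. rewrite Htt. fold t.
    assert (0 < P) by apply Rpower_pos.
    assert (t/(1+t) >= t/2).
    { apply Rle_ge. apply Rmult_le_compat_l; [lra|]. apply Rinv_le_contravar; lra. }
    assert (Ap a * (P - 1) >= t * P).
    { unfold Ap. assert (4 / a * (P-1) >= 4/a * (a * (t/(1+t)))).
      { apply Rle_ge. apply Rmult_le_compat_l; [|lra]. left; apply Rdiv_lt_0_compat; lra. }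
      assert (4 / a * (a * (t / (1 + t))) = 4 * (t/(1+t))) by (field; lra). nra. }
    apply (Rmult_le_reg_r (t*P)); [nra|].
    replace ((Ap a / (t * P) + 1) * (t * P)) with (Ap a + t*P) by (field; nra).
    replace (Ap a / t * (t * P)) with (Ap a * P) by (field; lra). nra. }
  assert (Hpos1 : 0 < tau a (Tmap a bt z)).
  { unfold tau. apply Rdiv_lt_0_compat; [lra| apply tt_pos]. }
  assert (Hb1 : Rpower (INR k + 1 + KK a bt + tau a (Tmap a bt z)) (gam a bt) <=
                Rpower (INR k + KK a bt + tau a z) (gam a bt)).
  { apply Rle_Rpower_l; lra. }
  assert (Hh : hh a (Tmap a bt z) <= Tp a bt z * hh a z).
  { unfold hh. rewrite Htt, HTz, HTp. fold t.
    assert (0 < P) by apply Rpower_pos.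
    assert (0 < 1 + t - a*t*t) by nra.
    assert (Hn : (1+t)^2 * P <= (1 + (1+a)*t) * (1 + t*P)).
    { assert (0 <= (1 + a*t - P) * (1 + t - a*t*t)) by (apply Rmult_le_pos; lra).
      assert (0 <= a*a*t*t*t) by (apply Rmult_le_pos; [|lra]; apply Rmult_le_pos; [|lra]; nra).
      nra. }
    apply (Rmult_le_reg_r ((1+t*P)*(1+t))); [nra|].
    replace (z * (1 + t) * (t * P) / (1 + t * P) * ((1 + t * P) * (1 + t))) with
      (z*t*((1+t)^2*P)) by (field; nra).
    replace ((1 + (1 + a) * t) * (z * t / (1 + t)) * ((1 + t * P) * (1 + t))) with
      (z*t*((1 + (1+a)*t) * (1 + t*P))) by (field; nra).
    apply Rmult_le_compat_l; [nra|exact Hn]. }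
  assert (0 <= hh a (Tmap a bt z)) by (left; apply hh_pos; rewrite HTz; nra).
  assert (0 <= Rpower (INR k + 1 + KK a bt + tau a (Tmap a bt z)) (gam a bt)) by (left; apply Rpower_pos).
  assert (0 <= Rpower (INR k + KK a bt + tau a z) (gam a bt)) by (left; apply Rpower_pos).
  apply Rle_trans with (Rpower (INR k + KK a bt + tau a z) (gam a bt) * (Tp a bt z * hh a z)).
  - apply Rmult_le_compat; lra.
  - lra.
Qed.

Lemma Rpower_le_base_lt1 u e : 0 < u < 1 -> 1 <= e -> Rpower u e <= u.
Proof.
  intros Hu He. unfold Rpower. rewrite <- (exp_ln u) at 2 by lra. apply exp_le.
  assert (ln u < 0) by (rewrite <- ln_1; apply ln_increasing; lra). nra.
Qed.

Lemma RP_RP x y z : Rpower (Rpower x y) z = Rpower x (y*z).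
Proof. apply Rpower_mult. Qed.

Lemma G_right_core a bt z : 0 < a < 1 -> 1 <= bt -> 1/2 < z < 1 ->
  Rpower (1 + (1 + tau a (Tmap a bt z)) / KK a bt) (gam a bt) * hh a (Tmap a bt z)
  <= Tp a bt z * hh a z.
Proof.
  intros Ha Hb Hz.
  destruct (T_right a bt z (proj1 Hz)) as [E1 [E2 _]].
  destruct (KK_props a bt ltac:(lra) Hb) as [HK [HK1 HK2]].
  assert (HA : 0 < Ap a) by (unfold Ap; apply Rdiv_lt_0_compat; lra).
  assert (Hg := gam_pos a bt ltac:(lra) Hb).
  set (u := 2*(z-1/2)) in *. assert (Hu : 0 < u < 1) by (unfold u; lra).
  set (w := Tmap a bt z) in *.
  assert (Hw : 0 < w < 1) by (rewrite E1; split; [apply Rpower_pos|apply Rpower_lt1; lra]).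
  set (s := tt a w).
  assert (Hs : 0 < s) by apply tt_pos.
  assert (Hhz : 0 < hh a z) by (apply hh_pos; lra).
  assert (HTp : Tp a bt z = 2*bt*Rpower u (bt-1)) by exact E2.
  assert (Hua : Rpower u (bt-1) = Rpower w ((bt-1)/bt)).
  { rewrite E1, RP_RP. f_equal. field. lra. }
  destruct (Rle_lt_dec w (1/4)) as [Hw4|Hw4].
  -
    assert (Hp := pow2ma a ltac:(lra)).
    assert (Hs2 : s <= Rpower 2 (-a)).
    { unfold s, tt. rewrite <- Rpower_inv_base by lra.
      apply Rle_Rpower_l; lra. }
    set (Y := s + (s + Ap a)/KK a bt).
    assert (HY : 0 < Y <= 1).
    { split. { unfold Y. assert (0 < (s + Ap a)/KK a bt) by (apply Rdiv_lt_0_compat; lra). lra. }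
      unfold Y. assert ((s + Ap a)/KK a bt <= (1 + Ap a)/KK a bt).
      { unfold Rdiv. apply Rmult_le_compat_r; [left; apply Rinv_0_lt_compat; lra|lra]. }
      lra. }
    assert (EX : 1 + (1 + tau a w) / KK a bt = /s * Y).
    { unfold Y, tau. fold s. field. split; lra. }
    rewrite EX, RP_mul by (try apply Rinv_0_lt_compat; lra).
    assert (HY1 : Rpower Y (gam a bt) <= 1) by (apply Rpower_le1; lra).
    assert (Hhw : hh a w <= w * s) by (apply hh_le; lra).
    assert (Hhz4 : 1/4 <= hh a z).
    { unfold hh. assert (1 < tt a z).
      { unfold tt. rewrite <- (Rpower_O (2*z)) at 1 by lra. apply Rpower_lt; lra. }
      apply (Rmult_le_reg_r (1 + tt a z)); [lra|].
      replace (z * tt a z / (1 + tt a z) * (1 + tt a z)) with (z * tt a z) by (field; lra).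
      nra. }
    assert (Hinv : 0 < Rpower (/s) (gam a bt)) by apply Rpower_pos.
    assert (Key : Rpower (/s) (gam a bt) * (w * s) = /2 * Rpower 2 (1 - 1/bt) * Rpower u (bt-1)).
    { rewrite Rpower_inv_base by lra.
      rewrite <- (Rpower_1 s) at 2 by lra.
      replace (Rpower s (- gam a bt) * (w * Rpower s 1)) with (w * (Rpower s (- gam a bt) * Rpower s 1)) by ring.
      rewrite RP_add. unfold s, tt. rewrite RP_RP.
      replace (a * (- gam a bt + 1)) with (- (1/bt)) by (unfold gam; field; lra).
      rewrite Hua.
      replace w with (/2 * (2*w)) at 1 by field.
      rewrite <- (Rpower_1 (2*w)) at 1 by lra.
      replace (/ 2 * Rpower (2 * w) 1 * Rpower (2 * w) (- (1 / bt))) with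
        (/2 * (Rpower (2 * w) 1 * Rpower (2 * w) (- (1 / bt)))) by ring.
      rewrite RP_add, RP_mul by lra.
      replace ((bt-1)/bt) with (1 + - (1/bt)) by (field; lra).
      replace (1 - 1/bt) with (1 + - (1/bt)) by ring. ring. }
    assert (H2b := pow2_le_bt bt Hb).
    assert (0 < Rpower u (bt-1)) by apply Rpower_pos.
    assert (0 <= Rpower Y (gam a bt)) by (left; apply Rpower_pos).
    assert (0 <= hh a w) by (left; apply hh_pos; lra).
    apply Rle_trans with (Rpower (/ s) (gam a bt) * (w * s)).
    + replace (Rpower (/ s) (gam a bt) * Rpower Y (gam a bt) * hh a w) with
        (Rpower (/ s) (gam a bt) * (Rpower Y (gam a bt) * hh a w)) by ring.
      apply Rmult_le_compat_l; [lra|].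
      apply Rle_trans with (1 * hh a w); [apply Rmult_le_compat_r; lra| lra].
    + rewrite Key, HTp.
      apply Rle_trans with (/2 * bt * Rpower u (bt-1)).
      * apply Rmult_le_compat_r; lra.
      * assert (2 * bt * Rpower u (bt - 1) * (1/4) <= 2 * bt * Rpower u (bt - 1) * hh a z)
          by (apply Rmult_le_compat_l; nra). lra.
  -
    assert (Hs2 : 1/2 <= s).
    { unfold s, tt. apply Rle_trans with (Rpower (1/2) a).
      - unfold Rpower. rewrite <- (exp_ln (1/2)) at 1 by lra. apply exp_le.
        assert (ln (1/2) < 0) by (rewrite <- ln_1; apply ln_increasing; lra). nra.
      - apply Rle_Rpower_l; lra. }
    assert (Htw : tau a w <= 2 * Ap a).
    { unfold tau. fold s. apply (Rmult_le_reg_r s); [lra|].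
      replace (Ap a / s * s) with (Ap a) by (field; lra). nra. }
    assert (HX : 1 + (1 + tau a w) / KK a bt <= 1 + epsp a bt).
    { assert ((1 + tau a w) / KK a bt <= (1 + 2*Ap a)/KK a bt).
      { unfold Rdiv. apply Rmult_le_compat_r; [left; apply Rinv_0_lt_compat; lra|lra]. }
      lra. }
    assert (Htau0 : 0 < tau a w) by (unfold tau; apply Rdiv_lt_0_compat; [lra|apply tt_pos]).
    assert (HR : Rpower (1 + (1 + tau a w) / KK a bt) (gam a bt) <= rho).
    { apply Rle_trans with (Rpower (1 + epsp a bt) (gam a bt)).
      - apply Rle_Rpower_l; [lra|]. split; [|exact HX].
        assert (0 < (1 + tau a w) / KK a bt) by (apply Rdiv_lt_0_compat; lra). lra.
      - unfold epsp. replace (1 + (Rpower rho (1 / gam a bt) - 1)) with (Rpower rho (1 / gam a bt)) by ring.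
        rewrite RP_RP. replace (1 / gam a bt * gam a bt) with 1 by (field; lra).
        rewrite Rpower_1 by (assert (H := rho_gt1); lra). lra. }
    assert (Hrho : rho <= Tp a bt z).
    { rewrite HTp, Hua. unfold rho. apply rho_le; lra. }
    assert (Hhw : hh a w <= hh a z).
    { apply hh_mono; [lra|]. split; [lra|].
      rewrite E1. assert (Rpower u bt <= u) by (apply Rpower_le_base_lt1; lra). unfold u in *; lra. }
    assert (0 <= hh a w) by (left; apply hh_pos; lra).
    assert (0 <= Rpower (1 + (1 + tau a w) / KK a bt) (gam a bt)) by (left; apply Rpower_pos).
    apply Rle_trans with (rho * hh a z).
    + apply Rmult_le_compat; lra.
    + apply Rmult_le_compat_r; lra.
Qed.

Lemma tau_pos a z : 0 < a -> 0 < tau a z.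
Proof. intros. unfold tau. apply Rdiv_lt_0_compat; [unfold Ap; apply Rdiv_lt_0_compat; lra|apply tt_pos]. Qed.

Lemma G_step a bt k z : 0 < a < 1 -> 1 <= bt -> good z ->
  GG a bt (S k) (Tmap a bt z) <= Tp a bt z * GG a bt k z.
Proof.
  intros Ha Hb [[H0 H1] H2].
  destruct (Rlt_dec z (1/2)) as [Hl|Hr]; [apply G_left; lra|].
  assert (Hr' : 1/2 < z) by (destruct (Rle_lt_or_eq_dec (1/2) z); [lra|lra|congruence]).
  assert (Hc := G_right_core a bt z Ha Hb ltac:(lra)).
  destruct (KK_props a bt ltac:(lra) Hb) as [HK _].
  set (w := Tmap a bt z) in *.
  assert (Hk := pos_INR k).
  assert (Htw := tau_pos a w ltac:(lra)). assert (Htz := tau_pos a z ltac:(lra)).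
  set (B := INR k + KK a bt + tau a z).
  set (X := 1 + (1 + tau a w) / KK a bt).
  assert (HX : 1 <= X). { unfold X. assert (0 < (1 + tau a w) / KK a bt) by (apply Rdiv_lt_0_compat; lra). lra. }
  assert (HB : INR (S k) + KK a bt + tau a w <= B * X).
  { rewrite S_INR. unfold X, B.
    assert (INR k + KK a bt + tau a z >= KK a bt) by lra.
    assert ((INR k + KK a bt + tau a z) * ((1 + tau a w) / KK a bt) >= 1 + tau a w).
    { replace ((INR k + KK a bt + tau a z) * ((1 + tau a w) / KK a bt)) with
        ((INR k + KK a bt + tau a z) / KK a bt * (1 + tau a w)) by (field; lra).
      assert ((INR k + KK a bt + tau a z) / KK a bt >= 1).
      { apply Rle_ge. apply (Rmult_le_reg_r (KK a bt)); [lra|].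
        replace ((INR k + KK a bt + tau a z) / KK a bt * KK a bt) with (INR k + KK a bt + tau a z) by (field; lra). lra. }
      nra. }
    nra. }
  unfold GG. fold B.
  assert (HR : Rpower (INR (S k) + KK a bt + tau a w) (gam a bt) <= Rpower B (gam a bt) * Rpower X (gam a bt)).
  { rewrite <- RP_mul by (unfold B; lra). apply Rle_Rpower_l.
    - assert (H := gam_pos a bt ltac:(lra) Hb). lra.
    - split; [|exact HB]. rewrite S_INR; lra. }
  assert (0 <= hh a w) by (left; apply hh_pos; apply (Tmap_range a bt z ltac:(lra) Hb ltac:(lra)); repeat split; lra).
  assert (0 < Rpower B (gam a bt)) by apply Rpower_pos.
  apply Rle_trans with (Rpower B (gam a bt) * Rpower X (gam a bt) * hh a w).
  - apply Rmult_le_compat_r; lra.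
  - rewrite Rmult_assoc. fold X in Hc.
    replace (Tp a bt z * (Rpower B (gam a bt) * hh a z)) with (Rpower B (gam a bt) * (Tp a bt z * hh a z)) by ring.
    apply Rmult_le_compat_l; lra.
Qed.

Definition MM (a bt : R) := Rpower (2 * KK a bt + Ap a) (gam a bt).

Lemma G_base a bt x : 0 < a < 1 -> 1 <= bt -> 0 < x < 1 -> GG a bt 0 x <= MM a bt.
Proof.
  intros Ha Hb Hx.
  destruct (KK_props a bt ltac:(lra) Hb) as [HK _].
  assert (HA : 0 < Ap a) by (unfold Ap; apply Rdiv_lt_0_compat; lra).
  assert (Hg := gam_pos a bt ltac:(lra) Hb).
  unfold GG, MM. simpl INR. rewrite Rplus_0_l.
  set (t := tt a x).
  assert (Ht : 0 < t < 2).
  { split; [apply tt_pos|]. unfold t, tt. apply Rlt_le_trans with (Rpower 2 a).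
    - apply Rlt_Rpower_l; lra.
    - rewrite <- (Rpower_1 2) at 2 by lra. apply Rle_Rpower; lra. }
  assert (E : KK a bt + tau a x = /t * (KK a bt * t + Ap a)) by (unfold tau; fold t; field; lra).
  rewrite E, RP_mul by (try apply Rinv_0_lt_compat; nra).
  assert (H1 : Rpower (KK a bt * t + Ap a) (gam a bt) <= Rpower (2 * KK a bt + Ap a) (gam a bt)).
  { apply Rle_Rpower_l; [lra|]. split; nra. }
  assert (H2 : hh a x <= x * t) by (apply hh_le; lra).
  assert (Key : Rpower (/t) (gam a bt) * (x * t) = /2 * Rpower (2*x) (1 - 1/bt)).
  { rewrite Rpower_inv_base by lra.
    rewrite <- (Rpower_1 t) at 2 by lra.
    replace (Rpower t (- gam a bt) * (x * Rpower t 1)) with (x * (Rpower t (- gam a bt) * Rpower t 1)) by ring.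
    rewrite RP_add. unfold t, tt. rewrite RP_RP.
    replace (a * (- gam a bt + 1)) with (- (1/bt)) by (unfold gam; field; lra).
    replace x with (/2 * (2*x)) at 1 by field.
    rewrite <- (Rpower_1 (2*x)) at 1 by lra.
    replace (/ 2 * Rpower (2 * x) 1 * Rpower (2 * x) (- (1 / bt))) with
      (/2 * (Rpower (2 * x) 1 * Rpower (2 * x) (- (1 / bt)))) by ring.
    rewrite RP_add. replace (1 - 1/bt) with (1 + - (1/bt)) by ring. reflexivity. }
  assert (H3 : Rpower (2*x) (1 - 1/bt) <= 2).
  { assert (0 <= 1 - 1/bt).
    { assert (1/bt <= 1). { unfold Rdiv; rewrite Rmult_1_l.
      rewrite <- Rinv_1. apply Rinv_le_contravar; lra. } lra. }
    apply Rle_trans with (Rpower 2 (1 - 1/bt)).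
    - apply Rle_Rpower_l; lra.
    - rewrite <- (Rpower_1 2) at 2 by lra. apply Rle_Rpower; [lra|].
      assert (0 < 1/bt) by (apply Rdiv_lt_0_compat; lra). lra. }
  assert (0 < Rpower (/ t) (gam a bt)) by apply Rpower_pos.
  assert (0 < Rpower (KK a bt * t + Ap a) (gam a bt)) by apply Rpower_pos.
  assert (0 <= hh a x) by (left; apply hh_pos; lra).
  apply Rle_trans with (Rpower (/ t) (gam a bt) * Rpower (2 * KK a bt + Ap a) (gam a bt) * (x * t)).
  - apply Rmult_le_compat; try lra.
    + apply Rmult_le_pos; lra.
    + apply Rmult_le_compat_l; lra.
  - replace (Rpower (/ t) (gam a bt) * Rpower (2 * KK a bt + Ap a) (gam a bt) * (x * t)) with
      (Rpower (2 * KK a bt + Ap a) (gam a bt) * (Rpower (/ t) (gam a bt) * (x * t))) by ring.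
    rewrite Key.
    assert (0 < Rpower (2 * KK a bt + Ap a) (gam a bt)) by apply Rpower_pos.
    assert (/ 2 * Rpower (2 * x) (1 - 1 / bt) <= 1) by lra.
    assert (Rpower (2 * KK a bt + Ap a) (gam a bt) * (/ 2 * Rpower (2 * x) (1 - 1 / bt)) <=
            Rpower (2 * KK a bt + Ap a) (gam a bt) * 1) by (apply Rmult_le_compat_l; lra).
    lra.
Qed.

Lemma G_final a bt m z b : 0 < a < 1 -> 1 <= bt -> (1 <= m)%nat -> 0 < b <= z ->
  Rpower (INR m) (gam a bt) * hh a b <= GG a bt m z.
Proof.
  intros Ha Hb Hm Hz.
  destruct (KK_props a bt ltac:(lra) Hb) as [HK _].
  assert (Hg := gam_pos a bt ltac:(lra) Hb).
  assert (HmR : 1 <= INR m) by (apply (le_INR 1); exact Hm).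
  assert (Htz := tau_pos a z ltac:(lra)).
  unfold GG. apply Rmult_le_compat.
  - left; apply Rpower_pos.
  - left; apply hh_pos; lra.
  - apply Rle_Rpower_l; lra.
  - apply hh_mono; lra.
Qed.

Lemma invariant a bt x : 0 < a < 1 -> 1 <= bt -> 0 < x < 1 -> forall m,
  (forall k, (k < m)%nat -> good (Titer a bt k x)) ->
  0 < DD a bt m x /\ GG a bt m (Titer a bt m x) / MM a bt <= DD a bt m x /\
  EE a bt m x <= 2 / Titer a bt m x * DD a bt m x ^ 2.
Proof.
  intros Ha Hb Hx m. assert (HM : 0 < MM a bt) by apply Rpower_pos.
  induction m as [|m IH]; intros Hg.
  - simpl. split; [lra|]. split.
    + assert (H := G_base a bt x Ha Hb Hx).
      apply (Rmult_le_reg_r (MM a bt)); [lra|].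
      replace (GG a bt 0 x / MM a bt * MM a bt) with (GG a bt 0 x) by (field; lra). lra.
    + assert (0 < 2/x) by (apply Rdiv_lt_0_compat; lra). nra.
  - destruct IH as [H1 [H2 H3]]. { intros k Hk. apply Hg. lia. }
    assert (Hgm : good (Titer a bt m x)) by (apply Hg; lia).
    assert (HTp := Tp_pos a bt _ ltac:(lra) Hb Hgm).
    simpl DD. simpl EE. rewrite Titer_S.
    split; [nra|]. split.
    + assert (HS := G_step a bt m _ Ha Hb Hgm).
      apply Rle_trans with (Tp a bt (Titer a bt m x) * (GG a bt m (Titer a bt m x) / MM a bt)).
      * unfold Rdiv. rewrite <- Rmult_assoc. apply Rmult_le_compat_r; [left; apply Rinv_0_lt_compat|]; lra.
      * apply Rmult_le_compat_l; lra.
    + apply E_step; auto.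
Qed.

Lemma iter_f1_0 a n : Nat.iter n (f1 a) 0 = 0.
Proof. induction n as [|n IH]; [reflexivity|]. simpl. rewrite IH. unfold f1. ring. Qed.

Theorem lemma2p11 (alpha beta : R) (hD : in_D alpha beta) (l : nat) (hl : (1 <= l)%nat)
  (b : R) (hb0 : 0 <= b) (hb : Nat.iter l (f1 alpha) b = 1/2) :
  exists C1 C2 : R, 0 < C1 /\ 0 < C2 /\
    forall (m : nat), (1 <= m)%nat ->
    forall x : R, 0 < x < 1 -> Titer alpha beta m x >= b ->
      / Derive (Titer alpha beta m) x
        <= C1 * Rpower (INR m) (-1 - 1 / (alpha * beta)) /\
      Derive_n (Titer alpha beta m) 2 x / (Derive (Titer alpha beta m) x) ^ 2 <= C2.
Proof.
  destruct hD as [Ha [Hb _]].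
  assert (Hbpos : 0 < b).
  { destruct hb0 as [H|H]; [exact H|]. subst b. rewrite iter_f1_0 in hb. lra. }
  assert (HM : 0 < MM alpha beta) by apply Rpower_pos.
  assert (Hhb := hh_pos alpha b Hbpos).
  exists (MM alpha beta / hh alpha b), (2 / b).
  split; [apply Rdiv_lt_0_compat; lra|]. split; [apply Rdiv_lt_0_compat; lra|].
  intros m Hm x Hx Hge.
  assert (Hpos : 0 < Titer alpha beta m x) by lra.
  assert (Hg := orbit_good alpha beta x ltac:(lra) Hb Hx m Hpos).
  assert (Hloc := iter_deriv alpha beta m x Hg).
  assert (HD1 : Derive (Titer alpha beta m) x = DD alpha beta m x).
  { apply is_derive_unique. exact (proj1 (locally_singleton _ _ Hloc)). }
  assert (HD2 : Derive_n (Titer alpha beta m) 2 x = EE alpha beta m x).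
  { simpl. rewrite (Derive_ext_loc _ (DD alpha beta m)).
    - apply is_derive_unique. exact (proj2 (locally_singleton _ _ Hloc)).
    - revert Hloc. apply filter_imp. intros y [Hy _]. apply is_derive_unique. exact Hy. }
  rewrite HD1, HD2.
  destruct (invariant alpha beta x Ha Hb Hx m Hg) as [I1 [I2 I3]].
  assert (Hlt1 := le_INR 1 m Hm). simpl in Hlt1.
  split.
  - assert (HF := G_final alpha beta m (Titer alpha beta m x) b Ha Hb Hm ltac:(lra)).
    assert (E : Rpower (INR m) (-1 - 1 / (alpha * beta)) = / Rpower (INR m) (gam alpha beta)).
    { rewrite <- Rpower_Ropp. f_equal. unfold gam. ring. }
    rewrite E.
    set (P := Rpower (INR m) (gam alpha beta)) in *.
    assert (0 < P) by apply Rpower_pos.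
    assert (Hlow : P * hh alpha b / MM alpha beta <= DD alpha beta m x).
    { apply Rle_trans with (GG alpha beta m (Titer alpha beta m x) / MM alpha beta); [|exact I2].
      unfold Rdiv. apply Rmult_le_compat_r; [left; apply Rinv_0_lt_compat; lra|exact HF]. }
    assert (0 < P * hh alpha b / MM alpha beta) by (apply Rdiv_lt_0_compat; nra).
    replace (MM alpha beta / hh alpha b * / P) with (/ (P * hh alpha b / MM alpha beta)) by (field; lra).
    apply Rinv_le_contravar; lra.
  - assert (0 < DD alpha beta m x ^ 2) by (apply pow_lt; lra).
    apply (Rmult_le_reg_r (DD alpha beta m x ^ 2)); [lra|].
    replace (EE alpha beta m x / DD alpha beta m x ^ 2 * DD alpha beta m x ^ 2) with (EE alpha beta m x) by (field; lra).
    apply Rle_trans with (2 / Titer alpha beta m x * DD alpha beta m x ^ 2); [exact I3|].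
    apply Rmult_le_compat_r; [lra|].
    unfold Rdiv. apply Rmult_le_compat_l; [lra|]. apply Rinv_le_contravar; lra.
Qed.
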